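(* Let $\tau>1$, $\gamma>0$, $\alpha\in D_{\gamma,\tau}$ with partial quotients $a_1,a_2,\dots$ and convergents $p_n/q_n$. Then for every even $n\ge0$: $$\frac{p_n}{q_n}+\frac{\gamma}{q_n^{\tau+1}}<\frac{p_{n+2}}{q_{n+2}}-\frac{\gamma}{q_{n+2}^{\tau+1}}$$ holds if and only if $$a_{n+2}>\frac{q_n}{\gamma q_{n+1}}\cdot\frac{1}{\left(\frac{1}{\gamma}-\frac{q_{n+1}}{q_n^{\tau}}\right)-\frac{q_nq_{n+1}}{q_{n+2}^{\tau+1}}}-\frac{q_n}{q_{n+1}}.$$
   Context: For $x\in\mathbb{R}$, $\|x\|:=\min_{p\in\mathbb{Z}}|x-p|$; $\mathbb{N}=\{1,2,\dots\}$. For $\gamma>0,\tau\ge1$, $D_{\gamma,\tau}:=\{\alpha\in(0,1): \|q\alpha\|\ge\gamma/q^\tau\ \forall q\in\mathbb{N}\}$; its elements are irrational. For irrational $\alpha\in(0,1)$ write $\alpha=\cfrac{1}{a_1+\cfrac{1}{a_2+\cdots}}$ (partial quotients $a_n\in\mathbb{N}$), and let $p_n/q_n$ ($n\ge0$) be its convergents: $p_{-1}=1,q_{-1}=0,p_0=0,q_0=1$, $p_n=a_np_{n-1}+p_{n-2}$, $q_n=a_nq_{n-1}+q_{n-2}$. *)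

(* Defs.v *)
From Stdlib Require Import Reals ZArith Arith.
Open Scope R_scope.

(* floor: Int_part x = up x - 1 is the floor of x for every real x. *)
(* ||x|| = min_{p in Z} |x - p| = min (x - floor x, floor x + 1 - x). *)
Definition distZ (x : R) : R :=
  Rmin (x - IZR (Int_part x)) (IZR (Int_part x) + 1 - x).

Definition inD (gamma tau alpha : R) : Prop :=
  0 < alpha < 1 /\
  forall q : nat, (1 <= q)%nat ->
    distZ (INR q * alpha) >= gamma / Rpower (INR q) tau.

Fixpoint gauss_iter (alpha : R) (k : nat) : R :=
  match k with
  | O => alpha
  | S k' => let x := gauss_iter alpha k' in / x - IZR (Int_part (/ x))
  end.

(* partial quotients: a_n = floor (1 / x_{n-1}) for n >= 1 (a_0 unused) *)
Definition pquot (alpha : R) (n : nat) : Z :=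
  Int_part (/ gauss_iter alpha (Nat.pred n)).

(* cf_pq alpha n = ((p_{n-1}, q_{n-1}), (p_n, q_n)) *)
Fixpoint cf_pq (alpha : R) (n : nat) : (Z * Z) * (Z * Z) :=
  match n with
  | O => ((1%Z, 0%Z), (0%Z, 1%Z))
  | S k =>
      let '((pm, qm), (p, q)) := cf_pq alpha k in
      let a := pquot alpha (S k) in
      ((p, q), (a * p + pm, a * q + qm)%Z)
  end.

Definition conv_p (alpha : R) (n : nat) : Z := fst (snd (cf_pq alpha n)).
Definition conv_q (alpha : R) (n : nat) : Z := snd (snd (cf_pq alpha n)).

(* Main.v *)
Require Import Defs.
From Stdlib Require Import Reals ZArith Arith Lra Lia.
Open Scope R_scope.

Lemma distZ_le x z : distZ x <= Rabs (x - IZR z).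
Proof.
  unfold distZ. destruct (base_Int_part x) as [H1 H2].
  set (f := Int_part x) in *.
  destruct (Z_le_gt_dec z f) as [Hz|Hz].
  - apply IZR_le in Hz. rewrite Rabs_right by lra.
    eapply Rle_trans. apply Rmin_l. lra.
  - assert (Hz' : (f + 1 <= z)%Z) by lia. apply IZR_le in Hz'.
    rewrite plus_IZR in Hz'. rewrite Rabs_left1 by lra.
    eapply Rle_trans. apply Rmin_r. lra.
Qed.

Lemma Rpower_pos x y : 0 < Rpower x y.
Proof. unfold Rpower. apply exp_pos. Qed.

Definition X al k := gauss_iter al k.
Definition Pm al k := IZR (fst (fst (cf_pq al k))).
Definition Qm al k := IZR (snd (fst (cf_pq al k))).
Definition P al k := IZR (conv_p al k).
Definition Q al k := IZR (conv_q al k).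
Definition A al k := IZR (pquot al k).

Lemma cf_S al k : cf_pq al (S k) =
  ((conv_p al k, conv_q al k),
   (pquot al (S k) * conv_p al k + fst (fst (cf_pq al k)),
    pquot al (S k) * conv_q al k + snd (fst (cf_pq al k))))%Z.
Proof. unfold conv_p, conv_q. simpl. destruct (cf_pq al k) as [[pm qm] [p q]]. reflexivity. Qed.

Lemma P_S al k : P al (S k) = A al (S k) * P al k + Pm al k.
Proof. unfold P, A, Pm, conv_p at 1. rewrite cf_S. simpl. rewrite plus_IZR, mult_IZR. reflexivity. Qed.
Lemma Q_S al k : Q al (S k) = A al (S k) * Q al k + Qm al k.
Proof. unfold Q, A, Qm, conv_q at 1. rewrite cf_S. simpl. rewrite plus_IZR, mult_IZR. reflexivity. Qed.
Lemma Pm_S al k : Pm al (S k) = P al k.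
Proof. unfold Pm, P. rewrite cf_S. reflexivity. Qed.
Lemma Qm_S al k : Qm al (S k) = Q al k.
Proof. unfold Qm, Q. rewrite cf_S. reflexivity. Qed.
Lemma X_S al k : X al (S k) = / X al k - IZR (Int_part (/ X al k)).
Proof. reflexivity. Qed.

Lemma X_SA al k : X al (S k) = / X al k - A al (S k).
Proof. reflexivity. Qed.

Lemma X_S_bounds al k : 0 <= X al (S k) < 1.
Proof. rewrite X_S. destruct (base_Int_part (/ X al k)). lra. Qed.

Lemma A_ge1 al k : 0 < X al k < 1 -> 1 <= A al (S k).
Proof.
  intros [H1 H2]. unfold A, pquot. simpl Nat.pred. fold (X al k).
  assert (1 < / X al k).
  { rewrite <- Rinv_1. apply Rinv_lt_contravar; lra. }
  destruct (base_Int_part (/ X al k)).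
  assert (Hp: (0 < Int_part (/ X al k))%Z) by (apply lt_IZR; lra).
  apply IZR_le. lia.
Qed.

Lemma E_rel al k : (forall j, (j < k)%nat -> X al j <> 0) ->
  (Q al k * al - P al k) + X al k * (Qm al k * al - Pm al k) = 0.
Proof.
  induction k as [|k IH]; intros H.
  - unfold Q, P, Qm, Pm, X, conv_q, conv_p. simpl. ring.
  - rewrite P_S, Q_S, Pm_S, Qm_S, X_SA.
    assert (Hk : X al k <> 0) by (apply H; lia).
    assert (IH' := IH (fun j Hj => H j ltac:(lia))).
    transitivity (/ X al k * ((Q al k * al - P al k) + X al k * (Qm al k * al - Pm al k))).
    + field. auto.
    + rewrite IH'. ring.
Qed.

Lemma Q_ge1 al k : (forall j, (j < k)%nat -> 0 < X al j < 1) -> 1 <= Q al k /\ 0 <= Qm al k.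
Proof.
  induction k as [|k IH]; intros HH.
  - unfold Q, Qm, conv_q. simpl. lra.
  - rewrite Q_S, Qm_S. destruct (IH (fun j Hj => HH j ltac:(lia))).
    assert (1 <= A al (S k)) by (apply A_ge1, HH; lia). nra.
Qed.

Lemma pos_div_iff x d : 0 < d -> (0 < x / d <-> 0 < x).
Proof.
  intros Hd. split; intro H.
  - replace x with (x / d * d) by (field; lra). apply Rmult_lt_0_compat; lra.
  - unfold Rdiv. apply Rmult_lt_0_compat; [lra| apply Rinv_0_lt_compat; lra].
Qed.

Lemma alg g Q0 Q1 Q2 a P0 P1 P2 R0 R1 R2 :
  0 < g -> 1 <= Q0 -> 1 <= Q1 -> 1 <= a -> 0 < R0 -> 0 < R1 -> 0 < R2 ->
  Q2 = a * Q1 + Q0 -> P2 = a * P1 + P0 -> P1 * Q0 - P0 * Q1 = 1 ->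
  g * Q1 / R0 + g * Q0 / R1 <= 1 -> Q1 * R1 < Q2 * R2 ->
  (P0 / Q0 + g / (R0 * Q0) < P2 / Q2 - g / (R2 * Q2))
  <->
  (a > Q0 / (g * Q1) * / ((/ g - Q1 / R0) - Q0 * Q1 / (R2 * Q2)) - Q0 / Q1).
Proof.
  intros Hg H0 H1 Ha HR0 HR1 HR2 EQ2 EP2 Hdet Hdio Hmon.
  assert (HQ2 : Q1 < Q2) by nra.
  set (D := (/ g - Q1 / R0) - Q0 * Q1 / (R2 * Q2)).
  assert (Hlt : Q1 / (R2 * Q2) < / R1).
  { assert (/ (Q2 * R2) < / (Q1 * R1)) by (apply Rinv_lt_contravar; [apply Rmult_lt_0_compat; apply Rmult_lt_0_compat; lra | lra]).
    replace (Q1 / (R2 * Q2)) with (Q1 * / (Q2 * R2)) by (field; lra).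
    replace (/ R1) with (Q1 * / (Q1 * R1)) by (field; lra).
    apply Rmult_lt_compat_l; lra. }
  assert (HD : 0 < D).
  { assert (g * D = 1 - g * Q1 / R0 - g * Q0 * (Q1 / (R2 * Q2))) by (unfold D; field; lra).
    assert (g * Q0 * (Q1 / (R2 * Q2)) < g * Q0 / R1).
    { unfold Rdiv at 2. apply Rmult_lt_compat_l; [nra|lra]. }
    nra. }
  set (core := a - g * Q2 / R0 - g * Q0 / R2).
  assert (E1 : (P2 / Q2 - g / (R2 * Q2)) - (P0 / Q0 + g / (R0 * Q0)) = core / (Q0 * Q2)).
  { transitivity ((P2 * Q0 - P0 * Q2 - g * Q2 / R0 - g * Q0 / R2) / (Q0 * Q2)).
    - field; lra.
    - replace (P2 * Q0 - P0 * Q2) with a.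
      + unfold core. reflexivity.
      + rewrite EQ2, EP2. replace a with (a * (P1 * Q0 - P0 * Q1)) at 1 by (rewrite Hdet; ring). ring. }
  assert (E2 : a - (Q0 / (g * Q1) * / D - Q0 / Q1) = Q1 * core / (g * Q1 * D)).
  { assert (E3 : Q2 * g * D - Q0 = Q1 * core) by (unfold D, core; rewrite EQ2; field; lra).
    rewrite <- E3. clearbody D. rewrite EQ2. field. repeat split; lra. }
  assert (Hp1 : 0 < Q0 * Q2) by nra.
  assert (Hp2 : 0 < g * Q1 * D) by (apply Rmult_lt_0_compat; nra).
  split; intro H.
  - assert (0 < core) by (apply (pos_div_iff core (Q0 * Q2)); [lra| rewrite <- E1; lra]).
    assert (0 < Q1 * core / (g * Q1 * D)) by (apply pos_div_iff; nra).
    lra.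
  - assert (0 < Q1 * core) by (apply (pos_div_iff _ (g * Q1 * D)); [lra| rewrite <- E2; lra]).
    assert (0 < core) by nra.
    assert (0 < core / (Q0 * Q2)) by (apply pos_div_iff; nra).
    lra.
Qed.

Lemma dio al g t k : 0 < g -> inD g t al -> 1 <= Q al k ->
  g / Rpower (Q al k) t <= Rabs (Q al k * al - P al k).
Proof.
  intros Hg [_ HD] HQ.
  assert (Hz : (0 <= conv_q al k)%Z) by (apply le_IZR; unfold Q in HQ; simpl; lra).
  assert (HI : INR (Z.to_nat (conv_q al k)) = Q al k).
  { rewrite INR_IZR_INZ, Z2Nat.id by exact Hz. reflexivity. }
  assert (H1 : (1 <= Z.to_nat (conv_q al k))%nat).
  { apply INR_le. rewrite HI. simpl. lra. }
  specialize (HD _ H1). rewrite HI in HD.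
  pose proof (distZ_le (Q al k * al) (conv_p al k)). fold (P al k) in H. lra.
Qed.

Lemma X_pos al g t : 0 < g -> inD g t al -> forall k, 0 < X al k < 1.
Proof.
  intros Hg HD.
  assert (Hall : forall k j, (j <= k)%nat -> 0 < X al j < 1).
  { induction k as [|k IH]; intros j Hj.
    - assert (j = 0%nat) by lia. subst. unfold X. simpl. destruct HD as [H _]. exact H.
    - destruct (Nat.eq_dec j (S k)) as [->|Hne]; [|apply IH; lia].
      pose proof (X_S_bounds al k) as [Hb1 Hb2].
      split; [|lra].
      destruct Hb1 as [Hb1|Hb1]; [exact Hb1|exfalso].
      assert (Hnz : forall j, (j < S k)%nat -> X al j <> 0).
      { intros i Hi. specialize (IH i ltac:(lia)). lra. }
      pose proof (E_rel al (S k) Hnz) as HE. rewrite <- Hb1 in HE.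
      destruct (Q_ge1 al (S k) (fun i Hi => IH i ltac:(lia))) as [HQ _].
      pose proof (dio al g t (S k) Hg HD HQ) as Hd.
      assert (Hz : Q al (S k) * al - P al (S k) = 0) by lra.
      rewrite Hz, Rabs_R0 in Hd.
      assert (0 < g / Rpower (Q al (S k)) t).
      { unfold Rdiv. apply Rmult_lt_0_compat; [lra|apply Rinv_0_lt_compat, Rpower_pos]. }
      lra. }
  intro k. apply (Hall k k). lia.
Qed.

Lemma det al k : P al (S k) * Q al k - P al k * Q al (S k) = (-1) ^ k.
Proof.
  induction k as [|k IH].
  - rewrite P_S, Q_S. unfold P, Q, Pm, Qm, conv_p, conv_q. simpl. ring.
  - rewrite (P_S al (S k)), (Q_S al (S k)), Pm_S, Qm_S. simpl. rewrite <- IH. ring.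
Qed.

Lemma even_pow n : Nat.Even n -> (-1) ^ n = 1.
Proof.
  intros [m ->]. rewrite pow_mult. replace ((-1) ^ 2) with 1 by ring. apply pow1.
Qed.

Lemma Rpower_S x t : 0 < x -> Rpower x (t + 1) = Rpower x t * x.
Proof. intros. rewrite Rpower_plus, Rpower_1 by lra. reflexivity. Qed.

Theorem lemma4 (tau gamma alpha : R) :
  1 < tau -> 0 < gamma -> inD gamma tau alpha ->
  forall n : nat, Nat.Even n ->
  let a := fun k => IZR (pquot alpha k) in
  let p := fun k => IZR (conv_p alpha k) in
  let q := fun k => IZR (conv_q alpha k) in
  (p n / q n + gamma / Rpower (q n) (tau + 1)
     < p (n + 2)%nat / q (n + 2)%nat - gamma / Rpower (q (n + 2)%nat) (tau + 1))
  <->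
  (a (n + 2)%nat >
     q n / (gamma * q (n + 1)%nat) *
       / ((/ gamma - q (n + 1)%nat / Rpower (q n) tau)
          - q n * q (n + 1)%nat / Rpower (q (n + 2)%nat) (tau + 1))
     - q n / q (n + 1)%nat).
Proof.
  intros Ht Hg HD n Hn a p q.
  unfold a, p, q. clear a p q.
  replace (n + 2)%nat with (S (S n)) by lia.
  replace (n + 1)%nat with (S n) by lia.
  fold (P alpha n) (P alpha (S (S n))) (Q alpha n) (Q alpha (S n)) (Q alpha (S (S n)))
       (A alpha (S (S n))).
  pose proof (X_pos alpha gamma tau Hg HD) as HX.
  assert (HXall : forall j, (j < S (S (S n)))%nat -> 0 < X alpha j < 1) by (intros; apply HX).
  destruct (Q_ge1 alpha n (fun j _ => HX j)) as [HQ0 _].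
  destruct (Q_ge1 alpha (S n) (fun j _ => HX j)) as [HQ1 _].
  assert (Ha : 1 <= A alpha (S (S n))) by (apply A_ge1, HX).
  assert (EQ2 : Q alpha (S (S n)) = A alpha (S (S n)) * Q alpha (S n) + Q alpha n)
    by (rewrite Q_S, Qm_S; reflexivity).
  assert (EP2 : P alpha (S (S n)) = A alpha (S (S n)) * P alpha (S n) + P alpha n)
    by (rewrite P_S, Pm_S; reflexivity).
  assert (Hdet : P alpha (S n) * Q alpha n - P alpha n * Q alpha (S n) = 1)
    by (rewrite det; apply even_pow; exact Hn).
  pose proof (E_rel alpha (S n) (fun j _ => ltac:(pose proof (HX j); lra))) as HE.
  rewrite Qm_S, Pm_S in HE.
  pose proof (HX (S n)) as Hx1.
  set (E0 := Q alpha n * alpha - P alpha n) in *.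
  set (E1 := Q alpha (S n) * alpha - P alpha (S n)) in *.
  assert (HE0 : 0 < E0).
  { assert (E0 * (Q alpha (S n) + Q alpha n * X alpha (S n)) = 1).
    { transitivity (Q alpha (S n) * E0 + Q alpha n * (X alpha (S n) * E0)); [ring|].
      replace (X alpha (S n) * E0) with (- E1) by lra.
      unfold E0, E1. rewrite <- Hdet. ring. }
    assert (0 < Q alpha (S n) + Q alpha n * X alpha (S n)) by nra.
    destruct (Rlt_or_le 0 E0) as [|Hle]; [assumption|].
    assert (E0 * (Q alpha (S n) + Q alpha n * X alpha (S n)) <= 0)
      by nra. lra. }
  assert (HE1 : E1 < 0) by nra.
  pose proof (dio alpha gamma tau n Hg HD HQ0) as D0.
  pose proof (dio alpha gamma tau (S n) Hg HD HQ1) as D1.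
  fold E0 in D0. fold E1 in D1.
  rewrite Rabs_right in D0 by lra. rewrite Rabs_left in D1 by lra.
  assert (HQ2 : 1 <= Q alpha (S (S n))) by nra.
  rewrite !Rpower_S by lra.
  pose proof (Rpower_pos (Q alpha n) tau).
  pose proof (Rpower_pos (Q alpha (S n)) tau).
  pose proof (Rpower_pos (Q alpha (S (S n))) tau).
  apply alg with (P1 := P alpha (S n)) (R1 := Rpower (Q alpha (S n)) tau); try assumption.
  -
    assert (E: Q alpha (S n) * E0 - Q alpha n * E1 = 1).
    { unfold E0, E1. rewrite <- Hdet. ring. }
    assert (gamma * Q alpha (S n) / Rpower (Q alpha n) tau = Q alpha (S n) * (gamma / Rpower (Q alpha n) tau)) by (field; lra).
    assert (gamma * Q alpha n / Rpower (Q alpha (S n)) tau = Q alpha n * (gamma / Rpower (Q alpha (S n)) tau)) by (field; lra).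
    nra.
  - rewrite (Rmult_comm (Q alpha (S n))), (Rmult_comm (Q alpha (S (S n)))), <- !Rpower_S by lra.
    apply Rlt_Rpower_l; [lra|]. split; [lra|]. nra.
Qed.
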